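(* For every $l\in\mathbb N$, the intersection of the real curve $\Gamma_l(\mathbb R)=\{(\lambda,\mu)\in\mathbb R^2: P_l(\lambda,\mu^2)=0\}$ with the open half-plane $\{\mu>0\}$ consists of $l$ pairwise non-intersecting smooth curves, none of which has a horizontal tangent line $\{\mu=\mathrm{const}\}$.
   Context: For $l\in\mathbb N$ and $\mu\in\mathbb C$, $H_l$ is the tridiagonal $l\times l$ matrix with entries $H_{l;jj}=(1-j)(l-j+1)$, $H_{l;j,j+1}=\mu j$, $H_{l;j,j-1}=\mu(l-j+1)$, and $H_{l;ij}=0$ if $|i-j|\geq 2$. It is known that $\det(H_l+\lambda\,\mathrm{Id})$ is a polynomial of degree $l$ in $(\lambda,\mu^2)$, written $P_l(\lambda,\mu^2)$. *)

(* Defs.v *)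
From HB Require Import structures.
From mathcomp Require Import all_boot all_order all_algebra.
From mathcomp Require Import all_classical all_reals all_analysis.
Set Implicit Arguments. Unset Strict Implicit. Unset Printing Implicit Defensive.
Import Order.TTheory GRing.Theory Num.Theory.
Local Open Scope ring_scope.

(* H_l as an l x l matrix with parameter mu; 0-based index i corresponds to
   the paper's j = i+1:
     H_{jj}     = (1-j)(l-j+1) = - i (l - i)
     H_{j,j+1}  = mu j         = mu (i+1)
     H_{j,j-1}  = mu (l-j+1)   = mu (l-i)
     other entries 0. *)
Definition Hmx (R : comRingType) (l : nat) (mu : R) : 'M[R]_l :=
  \matrix_(i < l, k < l)
    if k == i then - ((i * (l - i))%N%:R)
    else if k == i.+1 :> nat then mu * (i.+1)%:R
    else if i == k.+1 :> nat then mu * (l - i)%N%:R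
    else 0.

Definition Ppoly (R : comRingType) (l : nat) (mu : R) : {poly R} :=
  \det ('X%:M + map_mx polyC (Hmx l mu)).

(* F(lambda, mu) = P_l(lambda, mu^2) = det(H_l(mu) + lambda Id). *)
Definition Pl (R : comRingType) (l : nat) (lam mu : R) : R :=
  \det (Hmx l mu + lam%:M).

Definition dPl_dlam (R : comRingType) (l : nat) (lam mu : R) : R :=
  (Ppoly l mu)^`().[lam].

(* Main.v *)
Require Import Defs.
From HB Require Import structures.
From mathcomp Require Import all_boot all_order all_algebra.
From mathcomp Require Import all_classical all_reals all_analysis.
From mathcomp Require Import polyrcf ring lra zify.
Import Order.TTheory GRing.Theory Num.Theory.
Set Implicit Arguments. Unset Strict Implicit. Unset Printing Implicit Defensive.
Import numFieldNormedType.Exports.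
Local Open Scope classical_set_scope.
Local Open Scope ring_scope.
Section Prod.
Variable R : realFieldType.
Implicit Types (s : seq R) (x : R).

Definition PX s : {poly R} := \prod_(r <- s) ('X - r%:P).

Lemma PX_cons r s : PX (r :: s) = ('X - r%:P) * PX s.
Proof. by rewrite /PX big_cons. Qed.

Lemma PX_sign s x : x \notin s ->
  0 < (-1) ^+ (count (fun r => x < r) s) * (PX s).[x].
Proof.
elim: s => [|r s IH]; first by rewrite /PX big_nil hornerC expr0 mul1r ltr01.
rewrite in_cons negb_or => /andP[xr xs].
rewrite PX_cons hornerM hornerXsubC /=.
have := IH xs; case: (ltrgtP x r) => [xr'|xr'|xr']; last by rewrite xr' eqxx in xr.
- rewrite add1n exprS => H.
  have -> : (-1) * (-1) ^+ count (fun r0 : R => x < r0) s * ((x - r) * (PX s).[x])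
     = (r - x) * ((-1) ^+ count (fun r0 : R => x < r0) s * (PX s).[x]) by ring.
  by rewrite mulr_gt0 // subr_gt0.
- rewrite add0n => H.
  have -> : (-1) ^+ count (fun r0 : R => x < r0) s * ((x - r) * (PX s).[x])
     = (x - r) * ((-1) ^+ count (fun r0 : R => x < r0) s * (PX s).[x]) by ring.
  by rewrite mulr_gt0 // subr_gt0.
Qed.

Lemma PX_root s x : root (PX s) x = (x \in s).
Proof. exact: root_prod_XsubC. Qed.

Lemma PX_inj s1 s2 : sorted <%R s1 -> sorted <%R s2 -> PX s1 = PX s2 -> s1 = s2.
Proof.
move=> h1 h2 e.
have tr : transitive (<%R : rel R) by move=> ? ? ?; apply: lt_trans.
have irr : irreflexive (<%R : rel R) by move=> ?; rewrite ltxx.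
apply: (irr_sorted_eq tr irr h1 h2) => x.
by have := PX_root s1 x; have := PX_root s2 x; rewrite e => <- <-.
Qed.

Lemma PX_deriv s x : uniq s -> x \in s -> (PX s)^`().[x] != 0.
Proof.
elim: s => [|r s IH] //= /andP[rs us].
rewrite PX_cons derivM derivXsubC mul1r hornerD hornerM hornerXsubC in_cons.
case/predU1P => [->|xs].
  by rewrite subrr mul0r addr0; move: rs; rewrite -PX_root /root.
have /rootP -> : root (PX s) x by rewrite PX_root.
rewrite add0r mulf_neq0 ?IH // subr_eq0; apply: contraNneq rs => <-; exact: xs.
Qed.

Lemma PX_monic s : PX s \is monic.
Proof. exact: monic_prod_XsubC. Qed.

Lemma PX_size s : size (PX s) = (size s).+1.
Proof. exact: size_prod_XsubC. Qed.

Lemma count_gt_sorted x s j :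
  (forall i, (i < size s)%N -> (x < nth 0 s i) = (j <= i)%N) -> (j <= size s)%N ->
  count (fun r => x < r) s = (size s - j)%N.
Proof.
elim: s j => [|r s IH] j H hj /=; first by rewrite sub0n.
case: j H hj => [|j] H hj.
  have := H 0%N erefl; rewrite /= => ->.
  rewrite (IH 0%N) ?subn0 //= => i hi; exact: (H i.+1).
have := H 0%N erefl; rewrite /= => ->.
rewrite (IH j) //= => i hi; exact: (H i.+1).
Qed.

End Prod.
Lemma sign_sq (R : pzRingType) (m : nat) : (-1) ^+ m * (-1) ^+ m = 1 :> R.
Proof. by rewrite -exprD addnn -mul2n exprM expr2 mulrNN mulr1 expr1n. Qed.

Lemma monic_eq_PX (R : realFieldType) (Q : {poly R}) (t : seq R) :
  Q \is monic -> size Q = (size t).+1 -> all (root Q) t -> uniq t -> Q = PX t.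
Proof.
move=> mQ sQ rt ut.
have ur : poly.uniq_roots t by rewrite uniq_rootsE.
have [c ec] := uniq_roots_prod_XsubC rt ur.
have c0 : c != 0 by apply: contraTneq mQ => c0; rewrite ec c0 mul0r monicE lead_coef0 eq_sym oner_eq0.
have sc : size c = 1%N.
  move: sQ; rewrite ec size_Mmonic // ?monic_prod_XsubC // size_prod_XsubC.
  rewrite addnS /= => e; apply/eqP; rewrite -(eqn_add2r (size t)) e add1n.
  by [].
have := mQ; rewrite ec monicE lead_coefM lead_coef_prod_XsubC mulr1 => /eqP lc.
have -> : c = 1 by rewrite [c]size1_polyC ?sc //; move: lc; rewrite /lead_coef sc => ->.
by rewrite mul1r.
Qed.

Lemma nat_a (j k : nat) : (j < k.+2)%N -> ~~ (j < k.+1)%N -> j = k.+1. Proof. lia. Qed.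
Lemma nat_b (j k : nat) : (j < k.+1)%N -> ~~ (j.+1 < k.+1)%N -> j = k. Proof. lia. Qed.

Section Sturm.
Variables (R : rcfType) (a b : nat -> R) (q : nat -> {poly R}) (n : nat).
Hypotheses (q0 : q 0 = 1) (q1 : q 1 = 'X + (a 0)%:P)
 (qS : forall k, (k.+2 <= n)%N -> q k.+2 = ('X + (a k.+1)%:P) * q k.+1 - (b k)%:P * q k)
 (bpos : forall k, (k.+2 <= n)%N -> 0 < b k).

Definition Inv k := exists s, [/\ sorted <%R s, size s = k, q k = PX s,
  (size (q k.-1) <= k)%N &
  forall j, (j < k)%N -> 0 < (-1) ^+ (k.-1 - j) * (q k.-1).[nth 0 s j]].

Lemma Inv1 : Inv 1.
Proof.
exists [:: - a 0]; split => //=.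
- by rewrite q1 /PX big_seq1 polyCN opprK.
- by rewrite q0 size_poly1.
- by move=> [|j] // _; rewrite q0 hornerC expr0 mulr1 ltr01.
Qed.

Lemma InvS k : (1 <= k)%N -> (k < n)%N -> Inv k -> Inv k.+1.
Proof.
case: k => [//|k] _ kn [s [ss sz qk sq sg]].
rewrite /= in sq sg.
set Q := q k.+2.
have eQ : Q = ('X + (a k.+1)%:P) * PX s - (b k)%:P * q k by rewrite /Q qS // qk.
have bk := bpos kn.
have sM : size (('X + (a k.+1)%:P) * PX s) = k.+3.
  rewrite size_Mmonic ?PX_monic ?PX_size ?sz ?size_XaddC //.
  by rewrite -size_poly_eq0 size_XaddC.
have sN : (size (- ((b k)%:P * q k)) < k.+3)%N.
  rewrite size_polyN (leq_ltn_trans (size_polyMleq _ _)) //.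
  rewrite size_polyC (gt_eqF bk) /=; exact: (leq_trans sq).
have mQ : Q \is monic.
  rewrite eQ monicE lead_coefDl ?sM //.
  by rewrite lead_coefM lead_coefXaddC mul1r -monicE PX_monic.
have sQ : size Q = k.+3 by rewrite eQ size_polyDl sM.
have F2 : forall j, (j < k.+1)%N -> 0 < (-1) ^+ (k.+1 - j) * Q.[nth 0 s j].
  move=> j hj; have := sg j hj.
  have r0 : (PX s).[nth 0 s j] = 0.
    by apply/rootP; rewrite PX_root mem_nth ?sz.
  rewrite eQ hornerD hornerN !hornerM r0 mulr0 add0r hornerC subSn //.
  rewrite exprS => H.
  have -> : -1 * (-1) ^+ (k - j) * - (b k * (q k).[nth 0 s j]) =
     b k * ((-1) ^+ (k - j) * (q k).[nth 0 s j]) by ring.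
  by rewrite mulr_gt0.
have lQ : 0 < lead_coef Q by move: mQ; rewrite monicE => /eqP ->; exact: ltr01.
have [nU hU] := poly_pinfty_gt_lc lQ.
set Q' := ((-1) ^+ k.+2) *: (Q \Po - 'X).
have lQ' : 0 < lead_coef Q'.
  rewrite lead_coefZ lead_coef_comp ?size_polyN ?size_polyX //.
  rewrite lead_coefN lead_coefX sQ /=.
  by move: mQ; rewrite monicE => /eqP ->; rewrite mul1r sign_sq ltr01.
have [nL hL] := poly_pinfty_gt_lc lQ'.
set U := Num.max nU (nth 0 s k + 1).
set L := - Num.max nL (1 - nth 0 s 0).
have QU : 0 < Q.[U].
  apply: lt_le_trans lQ _; apply: hU; by rewrite le_max lexx.
have QL : 0 < (-1) ^+ k.+2 * Q.[L].
  apply: lt_le_trans lQ' _.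
  have := hL (Num.max nL (1 - nth 0 s 0)); rewrite le_max lexx /= => /(_ isT).
  by rewrite hornerZ horner_comp hornerN hornerX.
have sU : nth 0 s k < U by rewrite /U lt_max ltrDl ltr01 orbT.
have sL : L < nth 0 s 0.
  rewrite /L ltrNl lt_max; apply/orP; right.
  by rewrite ltrDr ltr01.
pose y j := if j is j'.+1 then (if (j' < k.+1)%N then nth 0 s j' else U) else L.
have sorted_s : forall i j, (i < k.+1)%N -> (j < k.+1)%N -> (i < j)%N -> nth 0 s i < nth 0 s j.
  move=> i j hi hj hij.
  by rewrite (lt_sorted_ltn_nth 0 ss) // inE sz.
have F4s : forall j, (j <= k.+2)%N -> 0 < (-1) ^+ (k.+2 - j) * Q.[y j].
  move=> [|j] hj /=; first by rewrite subn0.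
  case: ifP => hjk; first by rewrite subSS; apply: F2.
  have -> : j = k.+1 by move/negbT: hjk; apply: nat_a.
  by rewrite subnn expr0 mul1r.
have F4o : forall j, (j <= k.+1)%N -> y j < y j.+1.
  move=> [|j] hj /=; first exact: sL.
  have -> : (j < k.+1)%N := hj.
  case: ifP => hjk; first by apply: sorted_s.
  have -> : j = k by move/negbT: hjk; apply: nat_b.
  exact: sU.
have F5 : forall m, (m <= k.+2)%N -> exists t : seq R, size t = m /\
    forall j, (j < m)%N -> y j < nth 0 t j < y j.+1 /\ root Q (nth 0 t j).
  elim => [|m IH] hm; first by exists [::].
  have [t [st ht]] := IH (ltnW hm).
  have hQ : Q.[y m] * Q.[y m.+1] < 0.
    have A := F4s m (ltnW hm); have B := F4s m.+1 hm.
    move: A; rewrite subSn // exprS => A.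
    have -> : Q.[y m] * Q.[y m.+1] = - ((-1 * (-1) ^+ (k.+1 - m) * Q.[y m]) *
       ((-1) ^+ (k.+2 - m.+1) * Q.[y m.+1])).
      rewrite subSS.
      have := sign_sq R (k.+1 - m) => e.
      transitivity (((-1) ^+ (k.+1 - m) * (-1) ^+ (k.+1 - m)) * (Q.[y m] * Q.[y m.+1])); first by rewrite e mul1r.
      ring.
    by rewrite oppr_lt0 mulr_gt0.
  have [x xin rx] := poly_ivtoo (ltW (F4o m hm)) hQ.
  move: xin; rewrite in_itv /= => /andP[x1 x2].
  exists (rcons t x); split; first by rewrite size_rcons st.
  move=> j hj; rewrite nth_rcons st.
  case: ltnP => hjm; first exact: ht.
  have -> : j = m by apply/eqP; rewrite eqn_leq hjm -ltnS hj.
  by rewrite eqxx x1 x2.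
have [t [st ht]] := F5 k.+2 (leqnn _).
have tso : sorted <%R t.
  apply/(sortedP 0) => i hi; rewrite st in hi.
  have [/andP[_ h1] _] := ht i (ltnW hi).
  have [/andP[h2 _] _] := ht i.+1 hi.
  exact: lt_trans h1 h2.
have eQt : Q = PX t.
  apply: monic_eq_PX => //; first by rewrite sQ st.
    apply/allP => x /(nthP 0) [j hj <-]; rewrite st in hj; exact: (ht j hj).2.
  exact: lt_sorted_uniq.
exists t; split => //.
- by rewrite /= qk PX_size sz.
- move=> j hj /=.
  have [/andP[t1 t2] _] := ht j hj.
  have key : forall i, (i < size s)%N -> (nth 0 t j < nth 0 s i) = (j <= i)%N.
    move=> i; rewrite sz => hi.
    case: (leqP j i) => hji.
    - have yj : y j.+1 = nth 0 s j by rewrite /= (leq_ltn_trans hji hi).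
      rewrite (lt_le_trans t2) // yj.
      case: (ltnP j i) => hji'; first by apply/ltW/sorted_s => //; apply: leq_ltn_trans hji hi.
      by have -> : j = i by apply/anti_leq; rewrite hji hji'.
    - apply/negbTE; rewrite -leNgt; apply: ltW.
      case: j hj t1 t2 hji => [//|j] hj t1 t2 hji.
      rewrite ltnS in hj; rewrite ltnS in hji.
      move: t1; rewrite /y hj => t1.
      apply: (le_lt_trans _ t1).
      case: (ltnP i j) => hij; first by apply/ltW/sorted_s.
      by have -> : j = i by apply/anti_leq; rewrite hij hji.
  have nin : nth 0 t j \notin s.
    apply/negP => /(nthP 0) [i hi ei]; have := key i hi; rewrite ei ltxx.
    move=> /esym/negbT; rewrite -ltnNge => hij.
    move: t1; case: j hj hij key ei t2 => [//|j] hj hij key ei t2.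
    rewrite sz in hi; rewrite ltnS in hj; rewrite ltnS in hij.
    rewrite /y hj => t1.
    have : nth 0 s i <= nth 0 s j.
      case: (ltnP i j) => h; first by apply/ltW/sorted_s.
      by have -> : i = j by apply/anti_leq; rewrite h hij.
    by rewrite ei leNgt t1.
  by have := PX_sign nin; rewrite -qk (count_gt_sorted key) ?sz //.
Qed.

Lemma Sturm : exists s, [/\ sorted <%R s, size s = n & q n = PX s].
Proof.
have H : forall k, (1 <= k)%N -> (k <= n)%N -> Inv k.
  elim => [//|k IH] _ hk.
  case: k IH hk => [|k] IH hk; first exact: Inv1.
  by apply: InvS => //; apply: IH => //; apply: ltnW.
case: (posnP n) => [n0|npos].
  by exists [::]; split => //; rewrite n0 q0 /PX big_nil.
have [s [ss sz qs _ _]] := H n npos (leqnn _).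
by exists s.
Qed.

End Sturm.
Section Tri.
Variable T : comRingType.
Definition Tri (n : nat) (d u w : nat -> T) : 'M[T]_n :=
  \matrix_(i < n, j < n)
    if (j == i :> nat) then d i else if (j == i.+1 :> nat) then u i
    else if (i == j.+1 :> nat) then w j else 0.

Lemma Tri0 d u w : \det (Tri 0 d u w) = 1.
Proof. exact: det_mx00. Qed.

Lemma Tri1 d u w : \det (Tri 1 d u w) = d 0%N.
Proof. by rewrite det_mx11 mxE. Qed.

Lemma TriS k d u w : \det (Tri k.+2 d u w) =
  d k.+1 * \det (Tri k.+1 d u w) - u k * w k * \det (Tri k d u w).
Proof.
rewrite (expand_det_row _ ord_max) big_ord_recr /= big_ord_recr /=.
rewrite big1 ?add0r; last first.
  move=> i _; rewrite mxE /=.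
  have ik := ltn_ord i.
  rewrite (ltn_eqF (leqW ik)) (ltn_eqF (leqW (leqW ik))).
  by rewrite eqSS (gtn_eqF ik) mul0r.
rewrite !mxE /= eqxx (ltn_eqF (ltnSn k)) (ltn_eqF (leqW (ltnSn k))).
rewrite addrC; congr (_ + _).
  rewrite /cofactor exprD sign_sq mul1r; congr (_ * _).
  congr (\det _); apply/matrixP => i j; rewrite !mxE /= /bump.
  by rewrite !(leqNgt k.+1) !ltn_ord /= !add0n.
rewrite /cofactor /= (expand_det_col _ ord_max) big_ord_recr /=.
rewrite big1 ?add0r; last first.
  move=> i _; rewrite !mxE /= /bump.
  have ik := ltn_ord i.
  rewrite (leqNgt k.+1) (leqW ik) /= leqnn add0n add1n.
  rewrite (gtn_eqF (leqW ik)) eqSS (gtn_eqF ik).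
  by rewrite (ltn_eqF (leqW (leqW ik))) mul0r.
rewrite !mxE /= /bump (leqNgt k.+1) ltnSn leqnn add0n add1n eqxx.
rewrite (gtn_eqF (ltnSn _)).
rewrite /cofactor.
have -> : (-1) ^+ (k.+1 + k) = - 1 :> T.
  by rewrite addSn exprS exprD sign_sq mulr1.
rewrite exprD sign_sq mul1r.
have -> : \det (row' ord_max (col' ord_max (row' ord_max (col' (widen_ord (leqnSn k.+1) ord_max) (Tri k.+2 d u w))))) = \det (Tri k d u w).
  congr (\det _); apply/matrixP => i j; rewrite !mxE /= /bump.
  have ik := ltn_ord i; have jk := ltn_ord j.
  have h1 : (k <= i)%N = false by rewrite leqNgt ik.
  have h2 : (k <= j)%N = false by rewrite leqNgt jk.
  have h3 : (k < i)%N = false by rewrite ltnNge ltnW.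
  have h4 : (k < j)%N = false by rewrite ltnNge ltnW.
  by rewrite ?h1 ?h2 /= ?add0n ?h1 ?h2 ?h3 ?h4 /= ?add0n.
ring.
Qed.
End Tri.
Section Link.
Variable R : rcfType.
Variable l : nat.

Definition dd (i : nat) : {poly R} := 'X + (- (i * (l - i))%N%:R)%:P.
Definition uu (mu : R) (i : nat) : {poly R} := (mu * (i.+1)%:R)%:P.
Definition ww (mu : R) (j : nat) : {poly R} := (mu * (l - j.+1)%N%:R)%:P.

Lemma Ppoly_Tri mu : Ppoly l mu = \det (Tri l dd (uu mu) (ww mu)).
Proof.
rewrite /Ppoly; congr (\det _); apply/matrixP => i j; rewrite !mxE.
case: (eqVneq (val j) (val i)) => [e|ne].
  have eij : i = j by apply/val_inj.
  by rewrite eij eqxx mulr1n /dd.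
have ne' : (j == i) = false by apply/negbTE; apply: contra ne => /eqP ->.
have ne'' : (i == j) = false by apply/negbTE; apply: contra ne => /eqP ->.
rewrite ne'' mulr0n add0r; case: ifP => [/eqP eji|_]; first by move: ne; rewrite eji eqxx.
case: eqP => [_|_]; first by rewrite /uu.
case: eqP => [e|_]; last by [].
by rewrite /ww e.
Qed.

Lemma Ppoly_PX (mu : R) : 0 < mu -> exists s : seq R, [/\ sorted <%R s, size s = l & Ppoly l mu = PX s].
Proof.
move=> mu0.
pose a k : R := - (k * (l - k))%N%:R.
pose b k : R := mu * (k.+1)%:R * (mu * (l - k.+1)%N%:R).
have := @Sturm R a b (fun k => \det (Tri k dd (uu mu) (ww mu))) l.
rewrite -Ppoly_Tri; apply.
- exact: Tri0.
- by rewrite Tri1 /dd.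
- move=> k _; rewrite TriS /dd /uu /ww -!polyCM; congr (_ * _ - _ * _).
- move=> k hk; rewrite /b mulr_gt0 // mulr_gt0 // ?ltr0n //.
  by rewrite subn_gt0.
Qed.

End Link.
Section Boxes.
Variable R : rcfType.

Lemma boxes (s : seq R) (c : nat -> R) (d : R) : 0 < d -> sorted <%R s ->
  (forall j, (j < size s)%N -> (PX s).[c j - d] * (PX s).[c j + d] < 0) ->
  (forall j, (j.+1 < size s)%N -> c j + d < c j.+1 - d) ->
  forall j, (j < size s)%N -> c j - d < nth 0 s j < c j + d.
Proof.
move=> d0 ss hsg hord.
have F5 : forall m, (m <= size s)%N -> exists t : seq R, size t = m /\
    forall j, (j < m)%N -> c j - d < nth 0 t j < c j + d /\ root (PX s) (nth 0 t j).
  elim => [|m IH] hm; first by exists [::].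
  have [t [st ht]] := IH (ltnW hm).
  have cm : c m - d <= c m + d by rewrite lerD2l -(lerN2) opprK ltW // (lt_trans _ d0) // oppr_lt0.
  have [x xin rx] := poly_ivtoo cm (hsg m hm).
  move: xin; rewrite in_itv /= => /andP[x1 x2].
  exists (rcons t x); split; first by rewrite size_rcons st.
  move=> j hj; rewrite nth_rcons st.
  case: ltnP => hjm; first exact: ht.
  have -> : j = m by apply/eqP; rewrite eqn_leq hjm -ltnS hj.
  by rewrite eqxx x1 x2.
have [t [st ht]] := F5 (size s) (leqnn _).
have tso : sorted <%R t.
  apply/(sortedP 0) => i hi; rewrite st in hi.
  have [/andP[_ h1] _] := ht i (ltnW hi).
  have [/andP[h2 _] _] := ht i.+1 hi.
  exact: lt_trans h1 (lt_trans (hord i hi) h2).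
have sub : {subset t <= s}.
  move=> x /(nthP 0) [j hj <-]; rewrite st in hj; rewrite -PX_root; exact: (ht j hj).2.
have [_ eq_ts] := uniq_min_size (lt_sorted_uniq tso) sub (eq_leq (esym st)).
have tr : transitive (<%R : rel R) by move=> ? ? ?; apply: lt_trans.
have irr : irreflexive (<%R : rel R) by move=> ?; rewrite ltxx.
have ets := irr_sorted_eq tr irr tso ss eq_ts.
move=> j hj; rewrite -ets; exact: (ht j hj).1.
Qed.

End Boxes.
Section Gaps.
Variable R : realFieldType.

Lemma gap_ex (s : seq R) (eps : R) : 0 < eps -> sorted <%R s ->
  exists d, [/\ 0 < d, d <= eps &
    forall j, (j.+1 < size s)%N -> nth 0 s j + d < nth 0 s j.+1 - d].
Proof.
move=> e0; elim: s => [|x s IH] /=.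
  by move=> _; exists eps; split.
move=> hs; have ss := path_sorted hs.
have [d [d0 de hd]] := IH ss.
case: s hs ss IH hd => [|y s] hs ss IH hd.
  by exists d; split.
move: hs => /= /andP[xy _].
exists (Num.min d ((y - x) / 3)); split.
- by rewrite lt_min d0 divr_gt0 // subr_gt0.
- by rewrite ge_min de.
- move=> [|j] hj /=.
    have h3 : Num.min d ((y - x) / 3) <= (y - x) / 3 by rewrite ge_min lexx orbT.
    have : 0 < y - x by rewrite subr_gt0.
    move: h3; set m := Num.min _ _ => h3 h0.
    have : 0 < (y - x) / 3 by rewrite divr_gt0.
    lra.
  have := hd j hj; rewrite /=.
  have : Num.min d ((y - x) / 3) <= d by rewrite ge_min lexx.
  set m := Num.min _ _; lra.
Qed.

Lemma box_lo (s : seq R) d j i : 0 < d -> sorted <%R s ->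
  (forall j, (j.+1 < size s)%N -> nth 0 s j + d < nth 0 s j.+1 - d) ->
  (j < size s)%N -> (i < size s)%N ->
  (nth 0 s j - d < nth 0 s i) = (j <= i)%N /\ (nth 0 s i < nth 0 s j - d) = (i < j)%N.
Proof.
move=> d0 ss hd hj hi.
have mono : forall a b, (a < size s)%N -> (b < size s)%N -> (a <= b)%N -> nth 0 s a <= nth 0 s b.
  by move=> a b ha hb hab; rewrite (lt_sorted_leq_nth 0 ss) // inE.
case: (leqP j i) => hji.
  have : nth 0 s j <= nth 0 s i := mono _ _ hj hi hji.
  move=> h; split; first by apply: (lt_le_trans _ h); rewrite gtrDl oppr_lt0.
  apply/negbTE; rewrite -leNgt; apply: ltW; apply: (lt_le_trans _ h); rewrite gtrDl oppr_lt0 //.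
case: j hj hji => [//|j] hj hji.
have hji' : (i <= j)%N by rewrite -ltnS.
have h1 : nth 0 s i <= nth 0 s j := mono _ _ hi (ltn_trans (ltnSn j) hj) hji'.
have h2 := hd j hj.
have : nth 0 s i < nth 0 s j.+1 - d by move: h1 h2 d0; lra.
move=> h; split; last by [].
by apply/negbTE; rewrite -leNgt ltW.
Qed.

Lemma box_hi (s : seq R) d j i : 0 < d -> sorted <%R s ->
  (forall j, (j.+1 < size s)%N -> nth 0 s j + d < nth 0 s j.+1 - d) ->
  (j < size s)%N -> (i < size s)%N ->
  (nth 0 s j + d < nth 0 s i) = (j.+1 <= i)%N /\ (nth 0 s i < nth 0 s j + d) = (i < j.+1)%N.
Proof.
move=> d0 ss hd hj hi.
have mono : forall a b, (a < size s)%N -> (b < size s)%N -> (a <= b)%N -> nth 0 s a <= nth 0 s b.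
  by move=> a b ha hb hab; rewrite (lt_sorted_leq_nth 0 ss) // inE.
case: (leqP j.+1 i) => hji.
  have h1 : nth 0 s j.+1 <= nth 0 s i := mono _ _ (leq_ltn_trans hji hi) hi hji.
  have h2 := hd j (leq_ltn_trans hji hi).
  have h : nth 0 s j + d < nth 0 s i by move: h1 h2 d0; lra.
  split; first by [].
  by apply/negbTE; rewrite -leNgt ltW.
have hji' : (i <= j)%N by rewrite -ltnS.
have h1 : nth 0 s i <= nth 0 s j := mono _ _ hi hj hji'.
have h : nth 0 s i < nth 0 s j + d by move: h1 d0; lra.
split; last by [].
by apply/negbTE; rewrite -leNgt ltW.
Qed.

Lemma notin_keys (s : seq R) x J :
  (forall i, (i < size s)%N -> (x < nth 0 s i) = (J <= i)%N) ->
  (forall i, (i < size s)%N -> (nth 0 s i < x) = (i < J)%N) -> x \notin s.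
Proof.
move=> k1 k2; apply/negP => /(nthP 0) [i hi ei].
have := k1 i hi; have := k2 i hi; rewrite ei ltxx.
by case: (ltnP i J).
Qed.

Lemma box_sign (s : seq R) d j : 0 < d -> sorted <%R s ->
  (forall j, (j.+1 < size s)%N -> nth 0 s j + d < nth 0 s j.+1 - d) ->
  (j < size s)%N ->
  (PX s).[nth 0 s j - d] * (PX s).[nth 0 s j + d] < 0.
Proof.
move=> d0 ss hd hj.
have ka1 : forall i, (i < size s)%N -> (nth 0 s j - d < nth 0 s i) = (j <= i)%N.
  by move=> i hi; case: (box_lo d0 ss hd hj hi).
have ka2 : forall i, (i < size s)%N -> (nth 0 s i < nth 0 s j - d) = (i < j)%N.
  by move=> i hi; case: (box_lo d0 ss hd hj hi).
have kb1 : forall i, (i < size s)%N -> (nth 0 s j + d < nth 0 s i) = (j.+1 <= i)%N.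
  by move=> i hi; case: (box_hi d0 ss hd hj hi).
have kb2 : forall i, (i < size s)%N -> (nth 0 s i < nth 0 s j + d) = (i < j.+1)%N.
  by move=> i hi; case: (box_hi d0 ss hd hj hi).
have A := PX_sign (notin_keys ka1 ka2).
have B := PX_sign (notin_keys kb1 kb2).
rewrite (count_gt_sorted ka1) ?(ltnW hj) // in A.
rewrite (count_gt_sorted kb1) // in B.
rewrite subnS in B.
have pj : (0 < size s - j)%N by rewrite subn_gt0.
move: A; rewrite -(prednK pj) exprS => A.
set e := (-1) ^+ (size s - j).-1 in A B.
set u := (PX s).[_] in A *; set v := (PX s).[_] in B *.
have ee : e * e = 1 by rewrite /e sign_sq.
have : 0 < (-1 * e * u) * (e * v) by rewrite mulr_gt0.
have -> : (-1 * e * u) * (e * v) = - ((e * e) * (u * v)) by ring.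
by rewrite ee mul1r oppr_gt0.
Qed.

End Gaps.
Section Biv.
Variable R : realType.
Implicit Types (A B : {poly {poly R}}) (x y mu : R).

Definition E A x mu : R := (map_poly (horner_eval mu) A).[x].

Lemma E_add A B x mu : E (A + B) x mu = E A x mu + E B x mu.
Proof. by rewrite /E rmorphD hornerD. Qed.
Lemma E_mul A B x mu : E (A * B) x mu = E A x mu * E B x mu.
Proof. by rewrite /E rmorphM hornerM. Qed.
Lemma E_opp A x mu : E (- A) x mu = - E A x mu.
Proof. by rewrite /E rmorphN hornerN. Qed.
Lemma E_sub A B x mu : E (A - B) x mu = E A x mu - E B x mu.
Proof. by rewrite E_add E_opp. Qed.
Lemma E_natmul A n x mu : E (A *+ n) x mu = E A x mu *+ n.
Proof. by rewrite /E rmorphMn hornerMn. Qed.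
Lemma E_X x mu : E 'X x mu = x.
Proof. by rewrite /E map_polyX hornerX. Qed.
Lemma E_C (c : {poly R}) x mu : E c%:P x mu = c.[mu].
Proof. by rewrite /E map_polyC hornerC /=. Qed.
Lemma E_MXaddC A c x mu : E (A * 'X + c%:P) x mu = E A x mu * x + c.[mu].
Proof. by rewrite E_add E_mul E_X E_C. Qed.
Lemma E_horner A x mu : E A x mu = (A.[x%:P]).[mu].
Proof.
rewrite /E -[in LHS](hornerC x mu) -[X in (map_poly _ _).[X]]/(horner_eval mu x%:P).
by rewrite horner_map.
Qed.

Definition Dm A : {poly {poly R}} := map_poly (fun p : {poly R} => p^`()) A.

Lemma Dm_MXaddC A c : Dm (A * 'X + c%:P) = Dm A * 'X + (c^`())%:P.
Proof.
apply/polyP => i; rewrite /Dm coef_map_id0 ?deriv0 // !coefD !coefMX !coefC.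
rewrite coef_map_id0 ?deriv0 //.
by case: i => [|i] /=; rewrite ?derivD ?deriv0 ?add0r ?addr0 // coef_map_id0 ?deriv0.
Qed.

Lemma auxE1 (a1 a2 a3 a4 a5 a6 : R) :
  a1 * a6 + a4 * (a2 * a6 + a3) + a5 = (a1 + a2 * a4) * a6 + (a3 * a4 + a5).
Proof. ring. Qed.

Lemma is_derive_E A (g : R -> R) mu0 dg :
  is_derive mu0 1 g dg ->
  is_derive mu0 1 (fun mu => E A (g mu) mu)
    (E A^`() (g mu0) mu0 * dg + E (Dm A) (g mu0) mu0).
Proof.
move=> hg; elim/poly_ind: A => [|A c IH].
  rewrite deriv0 /Dm map_poly0.
  under [fun _ => _]funext do rewrite /E map_poly0 horner0.
  by rewrite /E !map_poly0 !horner0 mul0r addr0; exact: is_derive_cst.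
under [fun _ => _]funext do rewrite E_MXaddC.
rewrite derivMXaddC Dm_MXaddC E_add E_mul E_X E_MXaddC.
have hc : is_derive mu0 1 (horner c) c^`().[mu0] by exact: is_derive_poly.
have := is_deriveD (is_deriveM IH hg) hc.
move=> H; apply: (is_derive_eq H).
exact: auxE1.
Qed.

End Biv.
Section DQ.
Variable R : realType.

Lemma E0 (x mu : R) : E 0 x mu = 0.
Proof. by rewrite /E map_poly0 horner0. Qed.

Lemma cvg_Ey (T : Type) (F : set_system T) (FF : Filter F) (A : {poly {poly R}}) (y : R)
  (mh : T -> R) m0 : mh @ F --> m0 -> (fun t => E A y (mh t)) @ F --> E A y m0.
Proof.
move=> hm.
have -> : (fun t => E A y (mh t)) = (horner (A.[y%:P])) \o mh.
  by apply/funext => t /=; rewrite E_horner.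
rewrite E_horner; apply: continuous_cvg => //; exact: continuous_horner.
Qed.

Lemma auxD1 (a1 a2 a3 a4 a5 a6 : R) :
  a1 - a3 = (a4 - a5) * a2 ->
  a1 * a4 + a6 - (a3 * a5 + a6) = (a4 - a5) * (a2 * a4 + a3).
Proof. move=> h; have -> : a1 = a3 + (a4 - a5) * a2 by rewrite -h; ring. ring. Qed.

Lemma DQ_ex (B : {poly {poly R}}) (y : R) : exists D : R -> R -> R,
  [/\ forall x mu, E B x mu - E B y mu = (x - y) * D x mu,
      forall mu, D y mu = E B^`() y mu &
      forall (T : Type) (F : set_system T) (FF : Filter F) (xh mh : T -> R) x0 m0,
         xh @ F --> x0 -> mh @ F --> m0 -> (fun t => D (xh t) (mh t)) @ F --> D x0 m0].
Proof.
elim/poly_ind: B => [|A c [D [D1 D2 D3]]].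
  exists (fun _ _ => 0); split.
  - by move=> x mu; rewrite !E0 subrr mulr0.
  - by move=> mu; rewrite deriv0 E0.
  - by move=> T F FF xh mh x0 m0 _ _; exact: cvg_cst.
exists (fun x mu => D x mu * x + E A y mu); split.
- by move=> x mu; rewrite !E_MXaddC; apply: auxD1.
- by move=> mu; rewrite D2 derivMXaddC E_add E_mul E_X addrC.
- move=> T F FF xh mh x0 m0 hx hm.
  apply: cvgD; first exact: cvgM (D3 _ _ _ _ _ _ _ hx hm) hx.
  exact: cvg_Ey.
Qed.

End DQ.
Section IFT.
Variable R : realType.

Lemma auxI1 (a b c d h : R) : h != 0 -> d != 0 -> a - c = (b - c) * d ->
  a = 0 -> h^-1 * (b - c) = - (h^-1 * (c - 0)) * d^-1.
Proof.
move=> h0 d0 e a0; move: e; rewrite a0 => e.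
have -> : b - c = - c / d by rewrite -[b - c](mulfK d0) -e; ring.
by rewrite subr0 mulNr mulrN mulrA mulNr.
Qed.

Lemma auxI2 (a b g0 d h x l : R) : h != 0 -> d != 0 -> a - b = (x - l) * d ->
  a = 0 -> g0 = 0 -> - (h^-1 * (b - g0)) / d = h^-1 * (x - l).
Proof.
move=> h0 d0 e a0 g00; move: e; rewrite a0 g00 => e.
have -> : b - 0 = - ((x - l) * d) by rewrite -e; ring.
by rewrite mulrN opprK mulrA mulfK.
Qed.

Lemma implicit_derive (B : {poly {poly R}}) (f : R -> R) (mu0 : R) :
  (\forall mu \near mu0, E B (f mu) mu = 0) ->
  {for mu0, continuous f} ->
  E B^`() (f mu0) mu0 != 0 ->
  is_derive mu0 (1 : R) f (- E (Dm B) (f mu0) mu0 / E B^`() (f mu0) mu0).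
Proof.
move=> hB hf c0.
set l0 := f mu0.
have [D [D1 D2 D3]] := DQ_ex B l0.
have e0 : E B l0 mu0 = 0 := nbhs_singleton hB.
have hg := @is_derive_E R B (cst l0) mu0 0 (is_derive_cst _ _ _).
have hN0 : (fun h : R => h^-1 *: (((fun mu => E B (cst l0 mu) mu) \o shift mu0) (h *: 1)
   - E B (cst l0 mu0) mu0)) @ 0^' --> 'D_1 (fun mu => E B (cst l0 mu) mu) mu0
   := @ex_derive _ _ _ _ _ _ _ hg.
rewrite (@derive_val _ _ _ _ _ _ _ hg) mulr0 add0r in hN0.
set N := fun h : R => h^-1 * (E B l0 (h + mu0) - E B l0 mu0).
have hN : N @ 0^' --> E (Dm B) l0 mu0.
  apply: cvg_trans hN0; apply: near_eq_cvg; near=> h.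
  by rewrite /N /= [_%:A]mulr1.
set mh := fun h : R => h + mu0.
have hmh : mh @ 0^' --> mu0.
  apply: cvg_within_filter.
  have := @cvgD _ _ _ (nbhs (0:R)) _ id (cst mu0) 0 mu0 cvg_id (cvg_cst _).
  by rewrite add0r; apply.
have hfm : (f \o mh) @ 0^' --> l0 by apply: continuous_cvg hf hmh.
set Dh := fun h : R => D (f (mh h)) (mh h).
have hD : Dh @ 0^' --> E B^`() l0 mu0 by rewrite -D2; exact: (D3 _ _ _ _ _ _ _ hfm hmh).
have hDnz : \forall h \near 0^', Dh h != 0.
  apply: (hD [set x | x != 0]); exists `|E B^`() l0 mu0|; first by rewrite /= normr_gt0.
  move=> y; rewrite /= => yltfx.
  by apply/eqP => y0; move: yltfx; rewrite y0 subr0 ltxx.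
have hBh : \forall h \near 0^', E B (f (mh h)) (mh h) = 0 := hmh _ hB.
have hL : (fun h => - N h * (Dh h)^-1) @ 0^' --> - E (Dm B) l0 mu0 * (E B^`() l0 mu0)^-1.
  exact: (cvgM (cvgN hN) (cvgV c0 hD)).
have hq : (fun h : R => h^-1 *: ((f \o shift mu0) (h *: 1) - f mu0)) @ 0^' -->
    - E (Dm B) l0 mu0 / E B^`() l0 mu0.
  apply: cvg_trans hL; apply: near_eq_cvg.
  near=> h.
  have hn0 : h != 0 by near: h; exists 1 => //= y _.
  rewrite /= [_%:A]mulr1 /N -/(mh h).
  apply: (auxI2 (a := E B (f (mh h)) (mh h))) => //.
  - by near: h; exact: hDnz.
  - by near: h; exact: hBh.
apply: DeriveDef; first by apply/cvg_ex; eexists; exact: hq.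
exact: cvg_lim hq.
Unshelve. all: by end_near.
Qed.

End IFT.
Section Main.
Variable R : realType.
Variable l : nat.

Definition BB : {poly {poly R}} := Ppoly l ('X : {poly R}).

Lemma Hmx_eval (mu : R) i j : (Hmx l ('X : {poly R}) i j).[mu] = Hmx l mu i j.
Proof.
rewrite !mxE.
case: eqP => _; first by rewrite hornerN hornerMn hornerC.
case: eqP => _; first by rewrite hornerM hornerX hornerMn hornerC.
case: eqP => _; first by rewrite hornerM hornerX hornerMn hornerC.
by rewrite hornerC.
Qed.

Lemma Ppoly_BB (mu : R) : Ppoly l mu = map_poly (horner_eval mu) BB.
Proof.
rewrite /BB /Ppoly -det_map_mx; congr (\det _); apply/matrixP => i j.
rewrite !mxE rmorphD rmorphMn /= map_polyX map_polyC /=.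
rewrite horner_evalE; congr (_ + _%:P).
case: eqP => _; first by rewrite hornerN hornerMn hornerC.
case: eqP => _; first by rewrite hornerM hornerX hornerMn hornerC.
case: eqP => _; first by rewrite hornerM hornerX hornerMn hornerC.
by rewrite hornerC.
Qed.

Lemma Pl_Ppoly (lam mu : R) : Pl l lam mu = (Ppoly l mu).[lam].
Proof.
rewrite /Pl /Ppoly -horner_evalE -det_map_mx; congr (\det _); apply/matrixP => i j.
rewrite !mxE rmorphD rmorphMn /= horner_evalE hornerX horner_evalE hornerC.
by rewrite addrC.
Qed.

Lemma Pl_E (lam mu : R) : Pl l lam mu = E BB lam mu.
Proof. by rewrite Pl_Ppoly Ppoly_BB. Qed.

Lemma dPl_E (lam mu : R) : dPl_dlam l lam mu = E BB^`() lam mu.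
Proof. by rewrite /dPl_dlam Ppoly_BB deriv_map. Qed.

Definition Pr (mu : R) (s : seq R) := [/\ sorted <%R s, size s = l & Ppoly l mu = PX s].

Definition rts (mu : R) : seq R :=
  match pselect (exists s, Pr mu s) with
  | left h => proj1_sig (cid h)
  | right _ => [::]
  end.

Lemma rtsP mu : 0 < mu -> Pr mu (rts mu).
Proof.
move=> m0; rewrite /rts; case: pselect => [h|n].
  exact: (proj2_sig (cid h)).
by exfalso; apply: n; have [s [? ? ?]] := Ppoly_PX l m0; exists s.
Qed.

Lemma near_all (a : R) (m : nat) (P : nat -> R -> Prop) :
  (forall j, (j < m)%N -> \forall x \near a, P j x) ->
  \forall x \near a, forall j, (j < m)%N -> P j x.
Proof.
elim: m => [|m IH] H.
  by near=> x => j.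
have H1 := IH (fun j hj => H j (ltn_trans hj (ltnSn m))).
have H2 := H m (ltnSn m).
near=> x => j hj.
have [A1 A2] : (forall j, (j < m)%N -> P j x) /\ P m x.
  by split; near: x; [exact: H1|exact: H2].
case: (ltnP j m) => hjm; first exact: A1.
by have -> : j = m by apply/eqP; rewrite eqn_leq -ltnS hj hjm.
Unshelve. all: by end_near.
Qed.

Lemma rts_cont (i : nat) (mu0 : R) : (i < l)%N -> 0 < mu0 ->
  {for mu0, continuous (fun mu => nth 0 (rts mu) i)}.
Proof.
move=> il m0.
have [ss sz e0] := rtsP m0.
set s0 := rts mu0 in ss sz e0 *.
apply/cvgrPdist_lt => eps eps0.
have [d [d0 de hd]] := gap_ex eps0 ss.
have hsg : forall j, (j < l)%N -> \forall mu \near mu0,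
    (Ppoly l mu).[nth 0 s0 j - d] * (Ppoly l mu).[nth 0 s0 j + d] < 0.
  move=> j hj.
  pose g := fun mu => (BB.[(nth 0 s0 j - d)%:P] * BB.[(nth 0 s0 j + d)%:P]).[mu].
  have gE : forall mu, g mu = (Ppoly l mu).[nth 0 s0 j - d] * (Ppoly l mu).[nth 0 s0 j + d].
    by move=> mu; rewrite /g hornerM -!E_horner /E -!Ppoly_BB.
  have g0 : g mu0 < 0 by rewrite gE e0; apply: box_sign => //; rewrite sz.
  have gc : {for mu0, continuous g} := @continuous_horner _ _ mu0.
  have H := gc _ (lt_nbhsl g0).
  near=> mu; rewrite -gE; near: mu; exact: H.
have hall := near_all hsg.
have hpos : \forall mu \near mu0, 0 < mu := lt_nbhsr m0.
near=> mu.
have mpos : 0 < mu by near: mu.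
have hA : forall j, (j < l)%N -> (Ppoly l mu).[nth 0 s0 j - d] * (Ppoly l mu).[nth 0 s0 j + d] < 0.
  by near: mu.
have [ss1 sz1 e1] := rtsP mpos.
have hb1 : forall j, (j < size (rts mu))%N ->
    (PX (rts mu)).[nth 0 s0 j - d] * (PX (rts mu)).[nth 0 s0 j + d] < 0.
  by move=> j; rewrite sz1 -e1; exact: hA.
have hb2 : forall j, (j.+1 < size (rts mu))%N -> nth 0 s0 j + d < nth 0 s0 j.+1 - d.
  by move=> j; rewrite sz1 -sz; exact: hd.
have il' : (i < size (rts mu))%N by rewrite sz1.
have /andP[b1 b2] := @boxes R (rts mu) (fun j => nth 0 s0 j) d d0 ss1 hb1 hb2 i il'.
rewrite ltr_distlC; apply/andP; split.
  by apply: le_lt_trans b1; rewrite lerD2l lerN2.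
by apply: lt_le_trans b2 _; rewrite lerD2l.
Unshelve. all: by end_near.
Qed.

End Main.
Lemma auxS (R : realType) (a a1 a2 c c1 c2 bm : R) (k : nat) : c != 0 ->
 a * ((k%:R * (c^-1) ^+ k.-1) * (- c ^- 2 * (c1 * (- bm / c) + c2))) + (c^-1)^+k * (a1 * (- bm / c) + a2)
 = (((a2 * c - a1 * bm) * c) - (a * (c2 * c - c1 * bm)) *+ k) * (c^-1) ^+ k.+2.
Proof.
move=> c0; case: k => [|k].
  rewrite mulr0n subr0 expr0. field. done.
rewrite -mulr_natr /= !exprS. field. done.
Qed.

Section Smooth.
Variable R : realType.
Variable l : nat.

Local Notation BBl := (@BB R l).
Definition fr (i : nat) (mu : R) := nth 0 (rts l mu) i.

Lemma fr_root i (mu : R) : (i < l)%N -> 0 < mu -> E BBl (fr i mu) mu = 0.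
Proof.
move=> il m0; rewrite -Pl_E Pl_Ppoly; have [ss sz e] := rtsP l m0; rewrite e.
by apply/rootP; rewrite PX_root mem_nth ?sz.
Qed.

Lemma fr_nz i (mu : R) : (i < l)%N -> 0 < mu -> E BBl^`() (fr i mu) mu != 0.
Proof.
move=> il m0; rewrite -dPl_E /dPl_dlam; have [ss sz e] := rtsP l m0; rewrite e.
by apply: PX_deriv; [exact: lt_sorted_uniq | rewrite mem_nth ?sz].
Qed.

Lemma fr_derive i (mu0 : R) : (i < l)%N -> 0 < mu0 ->
  is_derive mu0 (1 : R) (fr i) (- E (Dm BBl) (fr i mu0) mu0 / E BBl^`() (fr i mu0) mu0).
Proof.
move=> il m0; apply: implicit_derive.
- near=> mu; apply: fr_root => //; near: mu; exact: lt_nbhsr.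
- exact: rts_cont.
- exact: fr_nz.
Unshelve. all: by end_near.
Qed.

Definition Anext (A : {poly {poly R}}) (k : nat) : {poly {poly R}} :=
  (Dm A * BBl^`() - A^`() * Dm BBl) * BBl^`()
  - (A * (Dm BBl^`() * BBl^`() - BBl^`()^`() * Dm BBl)) *+ k.

Definition gfun i (A : {poly {poly R}}) (k : nat) (mu : R) :=
  E A (fr i mu) mu * (E BBl^`() (fr i mu) mu)^-1 ^+ k.

Lemma step i A k (mu0 : R) : (i < l)%N -> 0 < mu0 ->
  is_derive mu0 (1 : R) (gfun i A k) (gfun i (Anext A k) k.+2 mu0).
Proof.
move=> il m0.
have hf := fr_derive il m0.
have hu := is_derive_E A hf.
have hc := is_derive_E BBl^`() hf.
have hw := @is_deriveV R (fun mu => E BBl^`() (fr i mu) mu) mu0 _ 1 (fr_nz il m0) hc.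
have hwk := is_deriveX k hw.
have hM := is_deriveM hu hwk.
have -> : gfun i A k = (fun mu => E A (fr i mu) mu) * (fun y => (E BBl^`() (fr i y) y)^-1) ^+ k.
  by rewrite exprfctE.
apply: (is_derive_eq hM).
rewrite /gfun /Anext !(E_sub, E_mul, E_natmul).
rewrite ![_ *: _]/(_ * _) exprfctE.
exact: auxS (fr_nz il m0).
Qed.

Lemma smooth i n : (i < l)%N -> exists A k, forall mu, 0 < mu -> derive1n n (fr i) mu = gfun i A k mu.
Proof.
move=> il; elim: n => [|n [A [k IH]]].
  exists 'X, 0%N => mu _; by rewrite derive1n0 /gfun E_X expr0 mulr1.
exists (Anext A k), k.+2 => mu m0.
rewrite derive1nS derive1E.
have hn : \forall y \near mu, derive1n n (fr i) y = gfun i A k y.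
  near=> y; apply: IH; near: y; exact: lt_nbhsr.
rewrite (near_eq_derive _ hn).
exact: (@derive_val _ _ _ _ _ _ _ (step A k il m0)).
Unshelve. all: by end_near.
Qed.

Lemma smooth_derivable i n (mu : R) : (i < l)%N -> 0 < mu -> derivable (derive1n n (fr i)) mu 1.
Proof.
move=> il m0; have [A [k H]] := smooth n il.
have hn : {near mu, gfun i A k =1 derive1n n (fr i)}.
  near=> y; rewrite H //; near: y; exact: lt_nbhsr.
apply: (near_eq_derivable hn).
exact: (@ex_derive _ _ _ _ _ _ _ (step A k il m0)).
Unshelve. all: by end_near.
Qed.

End Smooth.

Unset Implicit Arguments.

Theorem lemma1p6 (R : realType) (l : nat) :
  exists f : 'I_l -> R -> R,
    (* each curve is the graph lambda = f i mu of a smooth (C^oo) function of mu > 0 *)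
    (forall (i : 'I_l) (n : nat) (mu : R), 0 < mu -> derivable (derive1n n (f i)) mu 1) /\
    (* the curves are pairwise non-intersecting *)
    (forall (i j : 'I_l) (mu : R), 0 < mu -> (i < j)%N -> f i mu < f j mu) /\
    (* their union is exactly Gamma_l(R) intersected with {mu > 0} *)
    (forall lam mu : R, 0 < mu -> (Pl l lam mu = 0 <-> exists i : 'I_l, lam = f i mu)) /\
    (* no horizontal tangent {mu = const}: every point of Gamma_l(R) with mu > 0
       is a regular point with d/dlambda P_l(lambda, mu^2) <> 0 *)
    (forall lam mu : R, 0 < mu -> Pl l lam mu = 0 -> dPl_dlam l lam mu != 0).
Proof.
exists (fun i : 'I_l => @fr R l i); split; last split; last split.
- by move=> i n mu m0; exact: smooth_derivable (ltn_ord i) m0.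
- move=> i j mu m0 hij; have [ss sz _] := rtsP l m0.
  by rewrite /fr (lt_sorted_ltn_nth 0 ss) // inE sz.
- move=> lam mu m0; have [ss sz e] := rtsP l m0; rewrite Pl_Ppoly e; split.
  + move=> /rootP; rewrite PX_root => /(nthP 0) [i hi ei].
    have hi' : (i < l)%N by rewrite -sz.
    by exists (Ordinal hi'); rewrite /fr ei.
  + by move=> [i ->]; apply/rootP; rewrite PX_root mem_nth // sz.
- move=> lam mu m0 h0; have [ss sz e] := rtsP l m0.
  rewrite /dPl_dlam e; apply: PX_deriv; first exact: lt_sorted_uniq.
  by rewrite -PX_root -e; apply/rootP; rewrite -Pl_Ppoly.
Qed.
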